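(* Let $G$ be a connected triangle-free graph with no full star-cutset which is not a path on at most $4$ vertices. Then every subdivision $G^*$ of $G$ is a connected triangle-free graph with no full star-cutset.
   Context: A full star-cutset of a connected graph $G$ is a set $N[u]=\{u\}\cup N(u)$ whose removal disconnects $G$. A subdivision of a graph is obtained by replacing edges by paths. *)

(* Defs.v *)
From mathcomp Require Import all_boot.
Set Implicit Arguments. Unset Strict Implicit. Unset Printing Implicit Defensive.

Section Graphs.
Variable T : finType.
Implicit Types (e : rel T).

Definition simple_graph e : Prop := symmetric e /\ irreflexive e.

Definition connected_graph e : Prop :=
  0 < #|T| /\ forall x y : T, connect e x y.

Definition triangle_free e : Prop :=
  forall x y z : T, ~ [&& e x y, e y z & e x z].

Definition closed_nbhd e (u : T) : {set T} := [set v | (v == u) || e u v].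

Definition rel_minus e (S : {set T}) : rel T :=
  [rel a b | [&& e a b, a \notin S & b \notin S]].

Definition full_star_cutset e (u : T) : Prop :=
  exists x y : T, [/\ x \notin closed_nbhd e u, y \notin closed_nbhd e u
                    & ~~ connect (rel_minus e (closed_nbhd e u)) x y].

Definition has_full_star_cutset e : Prop := exists u, full_star_cutset e u.

Definition consecutive (s : seq T) (x y : T) : Prop :=
  exists i, i.+1 < size s /\ nth x s i = x /\ nth x s i.+1 = y.

Definition is_path_graph e : Prop :=
  exists s : seq T, [/\ uniq s, (forall x, x \in s) &
     forall x y, e x y <-> (consecutive s x y \/ consecutive s y x)].

End Graphs.

(* f (on T') is a subdivision of e (on T): there is an injection phi of the
   branch vertices and, for each edge uv of G, a sequence P u v of new internal
   vertices, such that the edge uv is replaced by the path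
   phi u, P u v, phi v; distinct edges get disjoint sets of internal vertices,
   internal vertices are not branch vertices, every vertex of H is a branch
   vertex or internal to some path, and every edge of H is an edge of one
   of these paths.  (Paths of length 1, i.e. P u v = [::], are allowed.) *)
Definition is_subdivision (T T' : finType) (e : rel T) (f : rel T') : Prop :=
  exists (phi : T -> T') (P : T -> T -> seq T'),
  injective phi /\
  [/\ (forall u v, e u v -> P v u = rev (P u v)),
      (forall u v, e u v -> path f (phi u) (rcons (P u v) (phi v))),
      (forall u v, e u v -> uniq (P u v) /\ forall w, phi w \notin P u v),
      (forall u v u' v', e u v -> e u' v' ->
          ~ (u' = u /\ v' = v) -> ~ (u' = v /\ v' = u) ->
          forall x, x \in P u v -> x \notin P u' v') &
      ((forall x : T', (exists w, phi w = x) \/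
                      exists u v, e u v /\ x \in P u v) /\
      (forall a b, f a b -> exists u v, e u v /\
          consecutive (phi u :: rcons (P u v) (phi v)) a b))].

(* Main.v *)
Require Import Defs.
From mathcomp Require Import all_boot zify.
Set Implicit Arguments. Unset Strict Implicit. Unset Printing Implicit Defensive.

Section Gen.
Variable T : finType.

Lemma rm_sym (e : rel T) (K : {set T}) : symmetric e -> symmetric (rel_minus e K).
Proof.
move=> hs x y; rewrite /rel_minus /= hs.
by case: (x \in K); case: (y \in K); rewrite ?andbF.
Qed.

Lemma clos_conn (r : rel T) (S : pred T) x y :
  (forall z w, S z -> r z w -> S w) -> S x -> connect r x y -> S y.
Proof.
move=> H Hx /connectP [p Hp ->]; elim: p x Hx Hp => [|a p IH] x Hx //= /andP [Hxa Hp].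
exact: IH (H _ _ Hx Hxa) Hp.
Qed.

Lemma card_list (s : seq T) : (forall y, y \in s) -> #|T| <= size s.
Proof.
move=> H; apply: leq_trans (card_size s); apply: subset_leq_card; apply/subsetP => y _.
exact: H.
Qed.

Lemma cons_cons (a b : T) s x y :
  consecutive (a :: b :: s) x y <-> (x = a /\ y = b) \/ consecutive (b :: s) x y.
Proof.
split.
  by case=> [[|i] [Hi [H1 H2]]]; [left | right; exists i].
case=> [[-> ->]|[i [Hi [H1 H2]]]]; first by exists 0.
by exists i.+1.
Qed.

Lemma cons_one (a : T) x y : ~ consecutive [:: a] x y.
Proof. by case=> i []. Qed.

Lemma cons_rev (s : seq T) x y : consecutive (rev s) x y -> consecutive s y x.
Proof.
case=> i [Hi [H1 H2]]; rewrite size_rev in Hi.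
have Hi' : i < size s by apply: ltnW.
rewrite nth_rev // in H2; rewrite nth_rev // in H1.
exists (size s - i.+2); split.
 - lia.
 - have E2 : (size s - i.+2).+1 = size s - i.+1 by lia.
   rewrite E2; split.
     by rewrite (set_nth_default x) //; lia.
   by rewrite (set_nth_default x) //; lia.
Qed.
Lemma cons_idx (s : seq T) x y : uniq s -> consecutive s x y ->
  [/\ x \in s, y \in s & index y s = (index x s).+1].
Proof.
move=> hu [i [Hi [H1 H2]]].
have Hi' : i < size s by apply: ltnW.
split; first by rewrite -H1 mem_nth.
  by rewrite -H2 mem_nth.
by rewrite -H1 -H2 !index_uniq.
Qed.

Lemma idx_cons (s : seq T) x y : x \in s -> y \in s -> index y s = (index x s).+1 ->
  consecutive s x y.
Proof.
move=> hx hy hi; exists (index x s); split.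
  by rewrite -hi index_mem.
by rewrite nth_index // -hi nth_index.
Qed.

Fixpoint consb (s : seq T) (x y : T) : bool :=
  if s is a :: s' then
    (if s' is b :: _ then ((x == a) && (y == b)) else false) || consb s' x y
  else false.

Lemma consbP s x y : consecutive s x y <-> consb s x y.
Proof.
elim: s => [|a [|b s] IH]; first by split => //; case=> i [].
  by split => //; move/cons_one.
rewrite cons_cons IH /=; split.
  by case=> [[-> ->]|->]; rewrite ?eqxx ?orbT.
by case/orP => [/andP [/eqP -> /eqP ->]|->]; [left|right].
Qed.

Lemma path_of (e : rel T) s : uniq s -> (forall y, y \in s) ->
  (forall x y, e x y = consb s x y || consb s y x) -> is_path_graph e.
Proof.
move=> hu hall he; exists s; split => // x y.
rewrite he; split => [/orP [h|h] | [h|h]].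
- by left; apply/consbP.
- by right; apply/consbP.
- by apply/orP; left; apply/consbP.
- by apply/orP; right; apply/consbP.
Qed.

Lemma seg (r : rel T) (K : {set T}) s x0 :
  (forall j, j.+1 < size s -> r (nth x0 s j) (nth x0 s j.+1)) ->
  forall i k, i <= k -> k < size s -> (forall j, i <= j <= k -> nth x0 s j \notin K) ->
  connect (rel_minus r K) (nth x0 s i) (nth x0 s k).
Proof.
move=> hr i k; elim: k => [|k IH] hik hk hK.
  by have -> : i = 0 by lia.
case: (eqVneq i k.+1) => [->|nik]; first exact: connect0.
have hik' : i <= k by lia.
apply: connect_trans (IH hik' (ltnW hk) _) _.
  by move=> j hj; apply: hK; lia.
apply: connect1; rewrite /rel_minus /= hr // !hK //; lia.
Qed.
End Gen.

Section G.
Variable (T : finType) (e : rel T).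
Hypotheses (esym : symmetric e) (eirr : irreflexive e) (econn : connected_graph e)
  (etf : triangle_free e) (encut : ~ has_full_star_cutset e).

Lemma nocut u x y : x \notin closed_nbhd e u -> y \notin closed_nbhd e u ->
  connect (rel_minus e (closed_nbhd e u)) x y.
Proof. move=> Hx Hy; apply/negPn/negP => H; apply: encut; exists u, x, y; split => //; apply/negP. Qed.

Lemma tri a b c : e a b -> e b c -> e a c -> False.
Proof. move=> h1 h2 h3; apply: (etf (x:=a) (y:=b) (z:=c)); by rewrite h1 h2 h3. Qed.

Lemma inN u v : (v \in closed_nbhd e u) = (v == u) || e u v.
Proof. by rewrite inE. Qed.

Lemma neq_of_e a b : e a b -> a != b.
Proof. by move=> h; apply: contraTneq h => ->; rewrite eirr. Qed.

Lemma leaf_path l u : e l u -> (forall z, e l z -> z = u) ->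
  is_path_graph e /\ #|T| <= 4.
Proof.
move=> hlu hl.
have hul : e u l by rewrite esym.
have nlu := neq_of_e hlu. have nul := neq_of_e hul.
case: (boolP [exists c, (c != l) && e u c]) => [/existsP [c /andP [ncl huc]] | /existsPn hno].
  have hcu : e c u by rewrite esym.
  have ncu := neq_of_e hcu. have nuc := neq_of_e huc.
  have nlc : l != c by rewrite eq_sym.
  have hcl : e c l = false.
    apply/negP => h; have E : c = u by apply: hl; rewrite esym.
    by rewrite E eirr in huc.
  have hlc : e l c = false by rewrite esym.
  have h1 : forall y, [|| y == l, y == c | e c y].
    move=> y; apply/negPn/negP => H.
    have Hl : l \notin closed_nbhd e c by rewrite inN negb_or hcl andbT.
    have Hy : y \notin closed_nbhd e c.
      by rewrite inN; apply: contra H => /orP [->|->]; rewrite ?orbT.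
    have := nocut Hl Hy.
    move/(@clos_conn _ _ (fun z => z == l) l y) => /= hy.
    have : y == l.
      apply: hy => //; move=> z w /eqP -> /=.
      by rewrite /rel_minus /= => /andP [/hl -> /andP [_]]; rewrite inN hcu orbT.
    by move=> hyl; move: H; rewrite hyl.
  have h2 : forall y, e u y -> (y == l) || (y == c).
    move=> y huy; case/or3P: (h1 y) => [->|->|hcy] //; first by rewrite orbT.
    by case: (tri huc hcy huy).
  case: (boolP [exists d, (d != u) && e c d]) => [/existsP [d /andP [ndu hcd]] | /existsPn hno2].
    have hdc : e d c by rewrite esym.
    have hld : e l d = false.
      by apply/negP => /hl E; move: ndu; rewrite E eqxx.
    have hdl : e d l = false by rewrite esym.
    have hud : e u d = false.
      apply/negP => /h2 /orP [/eqP E|/eqP E]; first by rewrite E hcl in hcd.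
      by rewrite E eirr in hcd.
    have hdu : e d u = false by rewrite esym.
    have ndc := neq_of_e hdc. have ncd := neq_of_e hcd.
    have nld : l != d by apply: contraTneq hcd => <-; rewrite hcl.
    have ndl : d != l by rewrite eq_sym.
    have nud : u != d by rewrite eq_sym.
    have ncl' : c != l by [].
    have hd : forall d', e c d' -> (d' == u) || (d' == d).
      move=> d' hcd'; apply/negPn/negP; rewrite negb_or => /andP [nd'u nd'd].
      have notN : forall z, z != u -> e c z -> z \notin closed_nbhd e u.
        move=> z nzu hcz; rewrite inN negb_or nzu /=.
        apply/negP => /h2 /orP [/eqP E|/eqP E]; first by rewrite E hcl in hcz.
        by rewrite E eirr in hcz.
      have := nocut (notN _ ndu hcd) (notN _ nd'u hcd').
      move/(@clos_conn _ _ (fun z => z == d) d d') => /= hy.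
      have : d' == d.
        apply: hy => //; move=> z w /eqP -> /=.
        rewrite /rel_minus /= => /andP [hdw /andP [_ hw]].
        case/or3P: (h1 w) => [/eqP E|/eqP E|hcw].
        - by rewrite E hdl in hdw.
        - by move: hw; rewrite E inN huc orbT.
        - by case: (tri hcd hdw hcw).
      by rewrite (negbTE nd'd).
    have hall : forall y, [|| y == l, y == u, y == c | y == d].
      move=> y; case/or3P: (h1 y) => [->|->|/hd /orP [->|->]] //; rewrite ?orbT //.
    split; last first.
      apply: leq_trans (card_list (s := [:: l; u; c; d]) _) _ => // y.
      by rewrite !inE.
    apply: (path_of (s := [:: l; u; c; d])).
    - by rewrite /= !inE !negb_or nlu nlc nld nuc nud ncd.
    - by move=> y; rewrite !inE.
    move=> x y.
    case/or4P: (hall x) => /eqP ->; case/or4P: (hall y) => /eqP ->;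
      rewrite /= ?eqxx ?eirr ?(negbTE nlu, negbTE nul, negbTE nlc, negbTE ncl, negbTE nld,
        negbTE ndl, negbTE nuc, negbTE ncu, negbTE nud, negbTE ndu, negbTE ncd, negbTE ndc)
        ?hlu ?hul ?hlc ?hcl ?hld ?hdl ?huc ?hcu ?hud ?hdu ?hcd ?hdc //.
  have hall : forall y, [|| y == l, y == u | y == c].
    move=> y; case/or3P: (h1 y) => [->|->|hcy] //; rewrite ?orbT //.
    by move: (hno2 y); rewrite hcy andbT negbK => ->; rewrite orbT.
  split; last first.
    apply: leq_trans (card_list (s := [:: l; u; c]) _) _ => // y.
    by rewrite !inE.
  apply: (path_of (s := [:: l; u; c])).
  - by rewrite /= !inE !negb_or nlu nlc nuc.
  - by move=> y; rewrite !inE.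
  move=> x y.
  case/or3P: (hall x) => /eqP ->; case/or3P: (hall y) => /eqP ->;
    rewrite /= ?eqxx ?eirr ?(negbTE nlu, negbTE nul, negbTE nlc, negbTE ncl,
      negbTE nuc, negbTE ncu) ?hlu ?hul ?hlc ?hcl ?huc ?hcu //.
have hall : forall y, (y == l) || (y == u).
  move=> y; apply: (@clos_conn _ _ (fun z => (z == l) || (z == u)) l y _ _ (econn.2 l y)); last by rewrite /= eqxx.
  move=> z w /= /orP [/eqP -> /hl -> | /eqP -> huw]; first by rewrite eqxx orbT.
  by move: (hno w); rewrite huw andbT negbK => ->.
split; last by apply: leq_trans (card_list (s := [:: l; u]) _) _ => // y; rewrite !inE.
apply: (path_of (s := [:: l; u])).
- by rewrite /= inE andbT.
- by move=> y; rewrite !inE.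
move=> x y.
case/orP: (hall x) => /eqP ->; case/orP: (hall y) => /eqP ->;
  rewrite /= ?eqxx ?eirr ?(negbTE nlu, negbTE nul) ?hlu ?hul //.
Qed.

Hypothesis npath : ~ (is_path_graph e /\ #|T| <= 4).

Lemma min_deg x : exists a b, [/\ a != b, e x a & e x b].
Proof.
case: (boolP [exists a, e x a]) => [/existsP [a hxa] | /existsPn hno].
  case: (boolP [exists b, (b != a) && e x b]) => [/existsP [b /andP [nba hxb]] | /existsPn hno2].
    by exists a, b; rewrite eq_sym nba.
  exfalso; apply: npath; apply: (leaf_path hxa) => z hxz.
  by move: (hno2 z); rewrite hxz andbT negbK => /eqP.
exfalso; apply: npath.
have hall : forall y, y == x.
  move=> y; apply: (@clos_conn _ _ (fun z => z == x) x y _ _ (econn.2 x y)); last by rewrite /=.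
  by move=> z w /= /eqP -> hxw; move: (hno w); rewrite hxw.
split; last by apply: leq_trans (card_list (s := [:: x]) _) _ => // y; rewrite !inE.
apply: (path_of (s := [:: x])) => //; first by move=> y; rewrite inE.
by move=> a b; rewrite (eqP (hall a)) (eqP (hall b)) eirr.
Qed.

Lemma star u (D : {set T}) : (forall d, d \in D -> e u d) ->
  forall x y, x \notin u |: D -> y \notin u |: D -> connect (rel_minus e (u |: D)) x y.
Proof.
move=> hD.
have csym := sym_connect_sym (rm_sym (u |: D) esym).
have notX : forall a, a \notin closed_nbhd e u -> a \notin u |: D.
  move=> a; rewrite inN in_setU1 !negb_or => /andP [nau hua].
  by rewrite nau /=; apply: contra hua => /hD.
have sub : forall a b, rel_minus e (closed_nbhd e u) a b -> connect (rel_minus e (u |: D)) a b.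
  move=> a b /andP [hab /andP [ha hb]]; apply: connect1.
  by rewrite /rel_minus /= hab !notX.
have rep : forall x, x \notin u |: D ->
    exists2 r, r \notin closed_nbhd e u & connect (rel_minus e (u |: D)) x r.
  move=> x hx; case: (boolP (x \in closed_nbhd e u)) => hxN; last by exists x.
  have hux : e u x.
    by move: hxN hx; rewrite inN in_setU1 => /orP [/eqP ->|//]; rewrite eqxx.
  have nr : forall r, e x r -> r != u -> r \notin closed_nbhd e u.
    move=> r hxr nru; rewrite inN negb_or nru /=.
    by apply/negP => hur; apply: (tri hux hxr hur).
  have [a [b [nab hxa hxb]]] := min_deg x.
  case: (eqVneq a u) => [Eau | nau].
    have nbu : b != u by rewrite -Eau eq_sym.
    exists b; first exact: nr.
    by apply: connect1; rewrite /rel_minus /= hxb hx notX //; exact: nr.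
  exists a; first exact: nr.
  by apply: connect1; rewrite /rel_minus /= hxa hx notX //; exact: nr.
move=> x y hx hy.
have [r1 h1 c1] := rep x hx. have [r2 h2 c2] := rep y hy.
apply: connect_trans c1 _; apply: connect_trans (_ : connect _ r1 r2) _.
  by apply: connect_sub (nocut h1 h2) => a b; apply: sub.
by rewrite csym.
Qed.

Definition eK u v (X : {set T}) := [rel a b | [&& e a b, a \notin X, b \notin X &
  ~~ (((a == u) && (b == v)) || ((a == v) && (b == u)))]].

Lemma eK_sym u v X : symmetric (eK u v X).
Proof.
move=> a b; rewrite /eK /= esym [(b == u) && _]andbC [(b == v) && _]andbC [(a == v) && _ || _]orbC.
by case: (a \in X); case: (b \in X).
Qed.

Lemma edge_conn u v (X : {set T}) : e u v -> (forall z, z \in X -> (z == u) || (z == v)) ->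
  forall x y, x \notin X -> y \notin X -> connect (eK u v X) x y.
Proof.
move=> huv hX.
have hvu : e v u by rewrite esym.
have nuv := neq_of_e huv. have nvu := neq_of_e hvu.
have csym := sym_connect_sym (eK_sym u v X).
have cen : forall c, c \in X -> (c = u \/ c = v) -> forall x y, x \notin X -> y \notin X ->
    connect (eK u v X) x y.
  move=> c hc hcuv x y hx hy.
  have EX : X = c |: (X :\ c) by rewrite setD1K.
  have hD : forall d, d \in X :\ c -> e c d.
    move=> d; rewrite in_setD1 => /andP [ndc /hX /orP [/eqP E|/eqP E]];
      case: hcuv => Ec; subst; rewrite ?eqxx // in ndc.
  have := @star c (X :\ c) hD x y; rewrite -EX => /(_ hx hy) H.
  apply: connect_sub H => a b /andP [hab /andP [ha hb]]; apply: connect1.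
  rewrite /eK /= hab ha hb /=.
  have nac : a != c by apply: contraNneq ha => ->.
  have nbc : b != c by apply: contraNneq hb => ->.
  by case: hcuv => Ec; subst; rewrite (negbTE nac) (negbTE nbc) ?andbF.
case: (boolP (u \in X)) => huX; first by apply: (cen u) => //; left.
case: (boolP (v \in X)) => hvX; first by apply: (cen v) => //; right.
have nX : forall z, z \notin X.
  by move=> z; apply/negP => /[dup] hz /hX /orP [/eqP E|/eqP E]; subst; rewrite hz in huX hvX.
have sub : forall a b, a != u -> b != u -> connect (eK u v X) a b.
  move=> a b nau nbu.
  have hD0 : forall d, d \in (set0 : {set T}) -> e u d by move=> d; rewrite inE.
  have := @star u set0 hD0 a b.
  rewrite setU0 !in_set1 nau nbu => /(_ isT isT) H.
  apply: connect_sub H => a' b' /andP [hab /andP [ha hb]]; apply: connect1.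
  rewrite !in_set1 in ha hb.
  by rewrite /eK /= hab !nX (negbTE ha) (negbTE hb) ?andbF.
have rep : forall x, exists2 r, r != u & connect (eK u v X) x r.
  move=> x; case: (eqVneq x u) => [->|nxu]; last by exists x.
  have [a [b [nab hua hub]]] := min_deg u.
  case: (eqVneq a v) => [Eav | nav].
    have nbv : b != v by rewrite -Eav eq_sym.
    exists b; first by rewrite eq_sym; apply: neq_of_e.
    by apply: connect1; rewrite /eK /= hub !nX eqxx (negbTE nbv) (negbTE nuv).
  exists a; first by rewrite eq_sym; apply: neq_of_e.
  by apply: connect1; rewrite /eK /= hua !nX eqxx (negbTE nav) (negbTE nuv).
move=> x y _ _.
have [r1 h1 c1] := rep x. have [r2 h2 c2] := rep y.
apply: connect_trans c1 _; apply: connect_trans (sub _ _ h1 h2) _.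
by rewrite csym.
Qed.
End G.

Section H.
Variables (T T' : finType) (e : rel T) (f : rel T') (phi : T -> T') (P : T -> T -> seq T').
Hypotheses (esym : symmetric e) (eirr : irreflexive e) (fsym : symmetric f) (firr : irreflexive f)
 (phiI : injective phi)
 (Prev : forall u v, e u v -> P v u = rev (P u v))
 (Ppath : forall u v, e u v -> path f (phi u) (rcons (P u v) (phi v)))
 (Puniq : forall u v, e u v -> uniq (P u v) /\ forall w, phi w \notin P u v)
 (Pdisj : forall u v u' v', e u v -> e u' v' -> ~ (u' = u /\ v' = v) -> ~ (u' = v /\ v' = u) ->
     forall x, x \in P u v -> x \notin P u' v')
 (Pcover : forall x : T', (exists w, phi w = x) \/ exists u v, e u v /\ x \in P u v)
 (Pedge : forall a b, f a b -> exists u v, e u v /\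
     consecutive (phi u :: rcons (P u v) (phi v)) a b).

Definition Q u v := phi u :: rcons (P u v) (phi v).

Lemma nophi u v w : e u v -> phi w \notin P u v.
Proof. by move=> h; have [_ ->] := Puniq h. Qed.

Lemma eneq u v : e u v -> u != v.
Proof. by move=> h; apply: contraTneq h => ->; rewrite eirr. Qed.

Lemma Quniq u v : e u v -> uniq (Q u v).
Proof.
move=> h; rewrite /Q /= rcons_uniq mem_rcons inE negb_or !nophi // andbT.
by rewrite (inj_eq phiI) eneq //=; have [-> _] := Puniq h.
Qed.

Lemma Qsize u v : size (Q u v) = (size (P u v)).+2.
Proof. by rewrite /= size_rcons. Qed.

Lemma Qnthl u v x0 : nth x0 (Q u v) (size (P u v)).+1 = phi v.
Proof. by rewrite /= nth_rcons ltnn eqxx. Qed.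

Lemma Qnthm u v x0 j : 0 < j -> j <= size (P u v) -> nth x0 (Q u v) j \in P u v.
Proof. by case: j => // j _ hj; rewrite /= nth_rcons hj mem_nth. Qed.

Lemma Qedge u v x0 j : e u v -> j.+1 < size (Q u v) ->
  f (nth x0 (Q u v) j) (nth x0 (Q u v) j.+1).
Proof.
move=> h hj; have /(pathP x0) H := Ppath h.
by apply: H; rewrite Qsize in hj; rewrite size_rcons.
Qed.

Lemma Qrev u v : e u v -> Q v u = rev (Q u v).
Proof. by move=> h; rewrite /Q Prev // rev_cons rev_rcons. Qed.

Lemma memQ u v y : (y \in Q u v) = [|| y == phi u, y == phi v | y \in P u v].
Proof. by rewrite /Q inE mem_rcons inE; case: (y == phi u); case: (y == phi v). Qed.

Lemma phiQ u v c : e u v -> phi c \in Q u v -> c = u \/ c = v.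
Proof.
move=> h; rewrite memQ (negbTE (nophi _ h)) orbF !(inj_eq phiI).
by case/orP => /eqP ->; [left | right].
Qed.

Lemma idxl u v : e u v -> index (phi v) (Q u v) = (size (P u v)).+1.
Proof. by move=> h; rewrite -{1}(Qnthl u v (phi u)) index_uniq ?Quniq // Qsize. Qed.

Lemma idxP u v y : e u v -> y \in P u v -> 0 < index y (Q u v) <= size (P u v).
Proof.
move=> h hy.
have hyQ : y \in Q u v by rewrite memQ hy !orbT.
have := index_mem y (Q u v); rewrite hyQ Qsize => hlt.
have hn := nth_index (phi u) hyQ.
case E : (index y (Q u v)) => [|i]; first by rewrite E /= in hn; move: hy; rewrite -hn (negbTE (nophi _ h)).
case: (eqVneq i (size (P u v))) => [Ei|nei]; last by rewrite E in hlt; lia.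
by move: hy; rewrite -hn E Ei Qnthl (negbTE (nophi _ h)).
Qed.

Lemma Qclass u v y : e u v -> y \in Q u v ->
  [\/ y = phi u /\ index y (Q u v) = 0, y = phi v /\ index y (Q u v) = (size (P u v)).+1 |
      y \in P u v /\ 0 < index y (Q u v) <= size (P u v)].
Proof.
move=> h; rewrite memQ => /or3P [/eqP ->|/eqP ->|hy].
- by apply: Or31; rewrite /= eqxx.
- by apply: Or32; rewrite idxl.
- by apply: Or33; split => //; apply: idxP.
Qed.

Lemma Pab_sym a b x : e a b -> x \in P a b -> x \in P b a.
Proof. by move=> h hx; rewrite (Prev h) mem_rev. Qed.

Lemma samedge a b u v y : e a b -> e u v -> y \in P a b -> y \in P u v ->
  (u = a /\ v = b) \/ (u = b /\ v = a).
Proof.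
move=> hab huv hy hy'.
case E1 : ((u == a) && (v == b)); first by case/andP: E1 => /eqP -> /eqP ->; left.
case E2 : ((u == b) && (v == a)); first by case/andP: E2 => /eqP -> /eqP ->; right.
exfalso; move: hy'; apply/negP; apply: (Pdisj hab huv) => //.
  by case=> Hu Hv; subst; rewrite !eqxx in E1.
by case=> Hu Hv; subst; rewrite !eqxx in E2.
Qed.

Lemma NL a b x y : e a b -> x \in P a b -> f x y ->
  y \in Q a b /\ (index y (Q a b) = (index x (Q a b)).+1 \/ index x (Q a b) = (index y (Q a b)).+1).
Proof.
move=> hab hx hxy; have [u [v [huv hc]]] := Pedge hxy.
have [hxQ hyQ hidx] := cons_idx (Quniq huv) hc.
have hxP : x \in P u v.
  move: hxQ; rewrite memQ => /or3P [/eqP E|/eqP E|//]; by move: hx; rewrite E (negbTE (nophi _ hab)).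
case: (samedge hab huv hx hxP) => [[Eu Ev]|[Eu Ev]]; subst u v.
  by split => //; left.
move: hc; rewrite -/(Q b a) Qrev // => /cons_rev hc.
have [hyQ' hxQ' hidx'] := cons_idx (Quniq hab) hc.
by split => //; right.
Qed.

Lemma BL a b : f (phi a) (phi b) -> e a b /\ P a b = [::].
Proof.
move=> hf; have [u [v [huv hc]]] := Pedge hf.
have [haQ hbQ hidx] := cons_idx (Quniq huv) hc.
have h0 : index (phi u) (Q u v) = 0 by rewrite /= eqxx.
have hl := idxl huv.
case: (phiQ huv haQ) => Ea; case: (phiQ huv hbQ) => Eb; subst a b;
  rewrite ?h0 ?hl in hidx => //; try lia.
by split => //; apply/eqP; rewrite -size_eq0; case: hidx => ->.
Qed.

Lemma nth_idx u v y : y \in Q u v -> nth (phi u) (Q u v) (index y (Q u v)) = y.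
Proof. exact: nth_index. Qed.

Lemma idx_nth u v j : e u v -> j < size (Q u v) -> index (nth (phi u) (Q u v) j) (Q u v) = j.
Proof. by move=> h hj; rewrite index_uniq ?Quniq. Qed.

Lemma arith3 i j k : j != k -> (j = i.+1 \/ i = j.+1) -> (k = i.+1 \/ i = k.+1) ->
  (k = j.+1 \/ j = k.+1) -> False.
Proof. move=> H1 [H2|H2] [H3|H3] [H4|H4]; lia. Qed.

Lemma tri_int a b x y z : e a b -> x \in P a b -> f x y -> f x z -> f y z -> False.
Proof.
move=> hab hx hxy hxz hyz.
have [hyQ iy] := NL hab hx hxy. have [hzQ iz] := NL hab hx hxz.
have nyz : y != z by apply: contraTneq hyz => ->; rewrite firr.
have niyz : index y (Q a b) != index z (Q a b).
  by apply: contra nyz => /eqP E; rewrite -(nth_idx hyQ) -(nth_idx hzQ) E.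
case: (Qclass hab hyQ) => [[Ey _]|[Ey _]|[hyP _]].
- case: (Qclass hab hzQ) => [[Ez _]|[Ez _]|[hzP _]].
  + by move: nyz; rewrite Ey Ez eqxx.
  + subst; have [_ E] := BL hyz; by rewrite E in hx.
  + have hzy : f z y by rewrite fsym.
    have [_ iz'] := NL hab hzP hzy.
    by apply: (arith3 niyz iy iz); case: iz' => ->; [right|left].
- case: (Qclass hab hzQ) => [[Ez _]|[Ez _]|[hzP _]].
  + subst; have [hba E] := BL hyz; by move: hx; rewrite (Prev hba) E.
  + by move: nyz; rewrite Ey Ez eqxx.
  + have hzy : f z y by rewrite fsym.
    have [_ iz'] := NL hab hzP hzy.
    by apply: (arith3 niyz iy iz); case: iz' => ->; [right|left].
- have [_ iz'] := NL hab hyP hyz.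
  exact: (arith3 niyz iy iz iz').
Qed.

Hypothesis etf : triangle_free e.

Lemma H_tf : triangle_free f.
Proof.
move=> x y z /and3P [hxy hyz hxz].
case: (Pcover x) => [[a Ea]|[u [v [huv hx]]]]; last exact: (tri_int huv hx hxy hxz hyz).
case: (Pcover y) => [[b Eb]|[u [v [huv hy]]]]; last first.
  by apply: (tri_int huv hy _ hyz hxz); rewrite fsym.
case: (Pcover z) => [[c Ec]|[u [v [huv hz]]]]; last first.
  by apply: (tri_int huv hz _ _ hxy); rewrite fsym.
subst; have [h1 _] := BL hxy; have [h2 _] := BL hyz; have [h3 _] := BL hxz.
by apply: (etf (x:=a) (y:=b) (z:=c)); rewrite h1 h2 h3.
Qed.

Lemma L1 (K : {set T'}) a b : e a b -> (forall y, y \in Q a b -> y \notin K) ->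
  connect (rel_minus f K) (phi a) (phi b).
Proof.
move=> hab hK.
have := @seg _ f K (Q a b) (phi a) (fun j hj => Qedge (phi a) hab hj) 0 (size (P a b)).+1.
rewrite Qnthl => H; apply: H => //; first by rewrite Qsize.
move=> j /andP [_ hj]; apply: hK; apply: mem_nth; rewrite Qsize; by apply: leq_ltn_trans hj _.
Qed.

Lemma Lleft (K : {set T'}) a b z : e a b -> z \in Q a b ->
  (forall j, j <= index z (Q a b) -> nth (phi a) (Q a b) j \notin K) ->
  connect (rel_minus f K) (phi a) z.
Proof.
move=> hab hz hK.
have := @seg _ f K (Q a b) (phi a) (fun j hj => Qedge (phi a) hab hj) 0 (index z (Q a b)).
rewrite nth_idx // => H; apply: H => //.
by rewrite index_mem.
Qed.

Lemma Lright (K : {set T'}) a b z : e a b -> z \in Q a b ->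
  (forall j, index z (Q a b) <= j <= (size (P a b)).+1 -> nth (phi a) (Q a b) j \notin K) ->
  connect (rel_minus f K) z (phi b).
Proof.
move=> hab hz hK.
have := @seg _ f K (Q a b) (phi a) (fun j hj => Qedge (phi a) hab hj) (index z (Q a b)) (size (P a b)).+1.
rewrite nth_idx // Qnthl => H; apply: H => //; last by rewrite Qsize.
by have := index_mem z (Q a b); rewrite hz Qsize.
Qed.

Lemma liftG (K : {set T'}) (r : rel T) :
  (forall a b, r a b -> e a b /\ forall y, y \in Q a b -> y \notin K) ->
  forall c d, connect r c d -> connect (rel_minus f K) (phi c) (phi d).
Proof.
move=> hr c d /connectP [p hp ->]; elim: p c hp => [|a p IH] c /=; first by move=> _; apply: connect0.
case/andP => hca hp; have [hca' hK] := hr _ _ hca.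
exact: connect_trans (L1 hca' hK) (IH a hp).
Qed.

Lemma combine (K : {set T'}) :
  (forall z, z \notin K -> exists2 c, phi c \notin K & connect (rel_minus f K) z (phi c)) ->
  (forall c d, phi c \notin K -> phi d \notin K -> connect (rel_minus f K) (phi c) (phi d)) ->
  forall x y, x \notin K -> y \notin K -> connect (rel_minus f K) x y.
Proof.
move=> h1 h2 x y hx hy.
have csym := sym_connect_sym (rm_sym K fsym).
have [c hc cx] := h1 x hx. have [d hd cy] := h1 y hy.
apply: connect_trans cx _; apply: connect_trans (h2 c d hc hd) _.
by rewrite csym.
Qed.

Hypothesis Gstar : forall u (D : {set T}), (forall d, d \in D -> e u d) ->
  forall x y, x \notin u |: D -> y \notin u |: D -> connect (rel_minus e (u |: D)) x y.

Lemma inNf w y : (y \in closed_nbhd f w) = (y == w) || f w y.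
Proof. by rewrite inE. Qed.

Lemma KA_branch u0 c : phi c \in closed_nbhd f (phi u0) -> c = u0 \/ (e u0 c /\ P u0 c = [::]).
Proof. by rewrite inNf => /orP [/eqP/phiI -> | /BL ?]; [left|right]. Qed.

Lemma KA_int u0 a b y : e a b -> y \in P a b -> y \in closed_nbhd f (phi u0) ->
  (u0 = a /\ index y (Q a b) = 1) \/ (u0 = b /\ index y (Q a b) = size (P a b)).
Proof.
move=> hab hy; rewrite inNf => /orP [/eqP E | hf].
  by move: hy; rewrite E (negbTE (nophi _ hab)).
have hf' : f y (phi u0) by rewrite fsym.
have [hQ hi] := NL hab hy hf'.
have := idxP hab hy.
case: (Qclass hab hQ) => [[E i0]|[E i1]|[hP _]].
- move=> _; left; split; first exact: phiI.
  by rewrite i0 in hi; case: hi => [//|->].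
- move=> hr; right; split; first exact: phiI.
  rewrite i1 in hi; move: hr hi; move: (index y (Q a b)) (size (P a b)) => i n; lia.
- by move: hP; rewrite (negbTE (nophi _ hab)).
Qed.

Lemma le_neq_lt j n : j <= n.+1 -> j != n.+1 -> j <= n.
Proof. lia. Qed.

Lemma caseA u0 x y : x \notin closed_nbhd f (phi u0) -> y \notin closed_nbhd f (phi u0) ->
  connect (rel_minus f (closed_nbhd f (phi u0))) x y.
Proof.
set K := closed_nbhd f (phi u0).
have csym := sym_connect_sym (rm_sym K fsym).
apply: combine.
  move=> z hz.
  have intA : forall a b, e a b -> z \in P a b -> u0 != b ->
      exists2 c, phi c \notin K & connect (rel_minus f K) z (phi c).
    move=> a b hab hzP nb.
    have hzQ : z \in Q a b by rewrite memQ hzP !orbT.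
    have /andP [iz1 iz2] := idxP hab hzP.
    case: (eqVneq u0 a) => [Ea|na].
      have hb : phi b \notin K.
        apply/negP => /KA_branch [Eb'|[_ Eb']]; first by rewrite Eb' eqxx in nb.
        by rewrite -Ea Eb' in hzP.
      exists b => //; apply: (Lright hab hzQ) => j /andP [hj1 hj2].
      case: (eqVneq j (size (P a b)).+1) => [->|nj]; first by rewrite Qnthl.
      have hjs : j <= size (P a b) by exact: le_neq_lt hj2 nj.
      have hj0 : 0 < j by apply: leq_trans iz1 hj1.
      have hjP : nth (phi a) (Q a b) j \in P a b by apply: Qnthm.
      apply/negP => hK; case: (KA_int hab hjP hK) => [[_ Ei]|[Eb' _]]; last by rewrite Eb' eqxx in nb.
      rewrite idx_nth // in Ei; last by rewrite Qsize; apply: leq_trans hjs _.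
      subst j.
      have Eiz : index z (Q a b) = 1 by apply/eqP; rewrite eqn_leq hj1 iz1.
      by move: hK; rewrite -Eiz nth_idx // (negbTE hz).
    have hint : forall j, 0 < j -> j <= size (P a b) -> nth (phi a) (Q a b) j \notin K.
      move=> j h1 h2; have hjP : nth (phi a) (Q a b) j \in P a b by apply: Qnthm.
      apply/negP => /(KA_int hab hjP) [[E _]|[E _]].
        by rewrite E eqxx in na.
      by rewrite E eqxx in nb.
    case: (boolP (phi a \in K)) => ha.
      have [Ea|[hua _]] := KA_branch ha; first by rewrite Ea eqxx in na.
      have hb : phi b \notin K.
        apply/negP => /KA_branch [Eb|[hub _]]; first by rewrite Eb eqxx in nb.
        by apply: (etf (x:=u0) (y:=a) (z:=b)); rewrite hua hab hub.
      exists b => //; apply: (Lright hab hzQ) => j /andP [hj1 hj2].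
      case: (eqVneq j (size (P a b)).+1) => [->|nj]; first by rewrite Qnthl.
      apply: hint; first by apply: leq_trans iz1 hj1.
      exact: le_neq_lt hj2 nj.
    exists a => //; rewrite csym; apply: (Lleft hab hzQ) => j hj.
    case: j hj => [|j] hj; first by [].
    by apply: hint => //; apply: leq_trans hj iz2.
  case: (Pcover z) => [[c Ec]|[a [b [hab hzP]]]]; first by exists c; subst; rewrite ?connect0.
  case: (eqVneq u0 b) => [Eb|nb]; last exact: intA hab hzP nb.
  apply: (intA b a); [by rewrite esym | exact: Pab_sym | by rewrite Eb eq_sym; apply: eneq].
move=> c d hc hd.
set D := [set z | e u0 z && (P u0 z == [::])].
have hD : forall z, z \in D -> e u0 z by move=> z; rewrite inE => /andP [].
have notX : forall c, phi c \notin K -> c \notin u0 |: D.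
  move=> c' hc'; rewrite in_setU1 inE negb_or; apply/andP; split.
    by apply: contra hc' => /eqP ->; rewrite inNf eqxx.
  apply/negP => /andP [hu hP]; move: hc'; rewrite inNf.
  have := Ppath hu; rewrite (eqP hP) /= => /andP [-> _]; by rewrite orbT.
apply: (liftG (r := rel_minus e (u0 |: D))); last exact: Gstar hD _ _ (notX _ hc) (notX _ hd).
move=> a b /andP [hab /andP [ha hb]]; split => // w.
rewrite memQ => /or3P [/eqP ->|/eqP ->|hyP].
- apply/negP => /KA_branch [E|[hu E]]; move: ha; rewrite in_setU1.
    by rewrite E eqxx.
  by rewrite /D inE hu E eqxx orbT.
- apply/negP => /KA_branch [E|[hu E]]; move: hb; rewrite in_setU1.
    by rewrite E eqxx.
  by rewrite /D inE hu E eqxx orbT.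
- apply/negP => /(KA_int hab hyP) [[E _]|[E _]]; [move: ha | move: hb];
    by rewrite in_setU1 E eqxx.
Qed.

Lemma reach_end (K : {set T'}) a b z : e a b -> z \in P a b ->
  (forall t, t \in P a b -> t \notin K) -> (phi a \notin K \/ phi b \notin K) ->
  exists2 c, phi c \notin K & connect (rel_minus f K) z (phi c).
Proof.
move=> hab hzP hint hend.
have csym := sym_connect_sym (rm_sym K fsym).
have hzQ : z \in Q a b by rewrite memQ hzP !orbT.
have /andP [iz1 iz2] := idxP hab hzP.
case: hend => [ha|hb].
  exists a => //; rewrite csym; apply: (Lleft hab hzQ) => j hj.
  case: j hj => [|j] hj; first by [].
  by apply: hint; apply: Qnthm => //; apply: leq_trans hj iz2.
exists b => //; apply: (Lright hab hzQ) => j /andP [hj1 hj2].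
case: (eqVneq j (size (P a b)).+1) => [->|nj]; first by rewrite Qnthl.
apply: hint; apply: Qnthm; first by apply: leq_trans iz1 hj1.
exact: le_neq_lt hj2 nj.
Qed.

Hypothesis Gedge : forall u v (X : {set T}), e u v -> (forall z, z \in X -> (z == u) || (z == v)) ->
  forall x y, x \notin X -> y \notin X -> connect (eK e u v X) x y.

Lemma KB a b w y : e a b -> w \in P a b -> y \in closed_nbhd f w ->
  y \in Q a b /\ (index y (Q a b) = index w (Q a b) \/ index y (Q a b) = (index w (Q a b)).+1
     \/ (index y (Q a b)).+1 = index w (Q a b)).
Proof.
move=> hab hw; rewrite inNf => /orP [/eqP -> | hf].
  by split; [rewrite memQ hw !orbT | left].
have [hQ [h|h]] := NL hab hw hf.
  by split => //; right; left.
by split => //; right; right; rewrite h.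
Qed.

Lemma KB_adj a b w j : e a b -> w \in P a b -> j < size (Q a b) ->
  (j = (index w (Q a b)).+1 \/ j.+1 = index w (Q a b)) -> nth (phi a) (Q a b) j \in closed_nbhd f w.
Proof.
move=> hab hw hj; have hwQ : w \in Q a b by rewrite memQ hw !orbT.
rewrite inNf => -[Ej|Ej]; apply/orP; right.
  have hj' : (index w (Q a b)).+1 < size (Q a b) by rewrite -Ej.
  by have := Qedge (phi a) hab hj'; rewrite nth_idx // -Ej.
have hj' : j.+1 < size (Q a b) by rewrite Ej index_mem.
by rewrite fsym; have := Qedge (phi a) hab hj'; rewrite Ej nth_idx.
Qed.

Lemma arithB1 i w j : i <> w -> i.+1 <> w -> i < w -> j <= i -> ~ (j = w \/ j = w.+1 \/ j.+1 = w).
Proof. lia. Qed.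
Lemma arithB2 i w j : i <> w -> i <> w.+1 -> w <= i -> i <= j -> ~ (j = w \/ j = w.+1 \/ j.+1 = w).
Proof. lia. Qed.

Lemma caseB u v w x y : e u v -> w \in P u v -> x \notin closed_nbhd f w -> y \notin closed_nbhd f w ->
  connect (rel_minus f (closed_nbhd f w)) x y.
Proof.
move=> huv hw; set K := closed_nbhd f w.
have csym := sym_connect_sym (rm_sym K fsym).
apply: combine.
  move=> z hz.
  case: (Pcover z) => [[c Ec]|[a [b [hab hzP]]]]; first by exists c; subst; rewrite ?connect0.
  have hzQ : z \in Q a b by rewrite memQ hzP !orbT.
  case: (boolP (w \in P a b)) => hwab.
    have hwQ : w \in Q a b by rewrite memQ hwab !orbT.
    have Kc : forall j, j < size (Q a b) -> nth (phi a) (Q a b) j \in K ->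
        j = index w (Q a b) \/ j = (index w (Q a b)).+1 \/ j.+1 = index w (Q a b).
      by move=> j hj /(KB hab hwab) [_]; rewrite idx_nth.
    have hzs : index z (Q a b) < size (Q a b) by rewrite index_mem.
    have n1 : index z (Q a b) <> index w (Q a b).
      move=> E; move: hz; rewrite -(nth_idx hzQ) E nth_idx // inNf eqxx //.
    have n2 : index z (Q a b) <> (index w (Q a b)).+1.
      move=> E; move: hz; rewrite -(nth_idx hzQ) KB_adj //; by left.
    have n3 : (index z (Q a b)).+1 <> index w (Q a b).
      move=> E; move: hz; rewrite -(nth_idx hzQ) KB_adj //; by right.
    case: (ltnP (index z (Q a b)) (index w (Q a b))) => hlt.
      have hL : forall j, j <= index z (Q a b) -> nth (phi a) (Q a b) j \notin K.
        move=> j hj; apply/negP => /Kc H.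
        apply: (arithB1 n1 n3 hlt hj); apply: H; exact: leq_ltn_trans hj hzs.
      exists a; first exact: (hL 0).
      by rewrite csym; apply: (Lleft hab hzQ).
    have hR : forall j, index z (Q a b) <= j <= (size (P a b)).+1 -> nth (phi a) (Q a b) j \notin K.
      move=> j /andP [hj1 hj2]; apply/negP => /Kc H.
      apply: (arithB2 n1 n2 hlt hj1); apply: H; by rewrite Qsize.
    exists b; last by apply: (Lright hab hzQ).
    rewrite -(Qnthl a b (phi a)); apply: hR; rewrite leqnn andbT.
    by rewrite Qsize in hzs.
  have hint : forall t, t \in P a b -> t \notin K.
    move=> t ht; apply/negP => /(KB huv hw) [htQ _].
    move: htQ; rewrite memQ => /or3P [/eqP E|/eqP E|htuv].
    - by move: ht; rewrite E (negbTE (nophi _ hab)).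
    - by move: ht; rewrite E (negbTE (nophi _ hab)).
    case: (samedge hab huv ht htuv) => [[Eu Ev]|[Eu Ev]]; subst.
      by rewrite hw in hwab.
    by move: hwab; rewrite (Pab_sym huv hw).
  apply: (reach_end hab hzP hint).
  case: (boolP (phi a \in K)) => ha; last by left.
  right; apply/negP => hb.
  have [haQ _] := KB huv hw ha. have [hbQ _] := KB huv hw hb.
  have nab := eneq hab.
  case: (phiQ huv haQ) => Ea; case: (phiQ huv hbQ) => Eb; subst.
  - by rewrite eqxx in nab.
  - by rewrite hw in hwab.
  - by move: hwab; rewrite (Pab_sym huv hw).
  - by rewrite eqxx in nab.
move=> c d hc hd.
set X := [set z | phi z \in K].
have hX : forall z, z \in X -> (z == u) || (z == v).
  move=> z; rewrite inE => /(KB huv hw) [hQ _].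
  by case: (phiQ huv hQ) => ->; rewrite eqxx ?orbT.
have notX : forall c, phi c \notin K -> c \notin X by move=> c' hc'; rewrite /X inE.
apply: (liftG (r := eK e u v X)); last exact: Gedge huv hX _ _ (notX _ hc) (notX _ hd).
move=> a b; rewrite /eK /= => /and4P [hab ha hb hnp]; split => // t.
rewrite memQ => /or3P [/eqP ->|/eqP ->|htP]; [by rewrite inE in ha | by rewrite inE in hb |].
apply/negP => /(KB huv hw) [htQ _].
move: htQ; rewrite memQ => /or3P [/eqP E|/eqP E|htuv].
- by move: htP; rewrite E (negbTE (nophi _ hab)).
- by move: htP; rewrite E (negbTE (nophi _ hab)).
case: (samedge hab huv htP htuv) => [[Eu Ev]|[Eu Ev]]; subst; by rewrite !eqxx ?orbT in hnp.
Qed.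

Lemma H_nocut : ~ has_full_star_cutset f.
Proof.
move=> [w [x [y [hx hy hnc]]]]; apply: (negP hnc).
case: (Pcover w) => [[u0 Ew]|[u [v [huv hw]]]].
  by subst w; apply: caseA.
exact: caseB huv hw hx hy.
Qed.

Hypotheses (Gconn : forall c d, connect e c d) (Tpos : 0 < #|T|).

Lemma H_conn : connected_graph f.
Proof.
split; first by case/card_gt0P: Tpos => t _; apply/card_gt0P; exists (phi t).
move=> x y.
have H : connect (rel_minus f set0) x y.
  apply: combine; rewrite ?inE //.
    move=> z _; case: (Pcover z) => [[c Ec]|[a [b [hab hzP]]]]; first by exists c; subst; rewrite ?inE ?connect0.
    by apply: (reach_end hab hzP) => [t _|]; rewrite inE //; left.
  move=> c d _ _; apply: (liftG (r := e)); last exact: Gconn.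
  by move=> a b hab; split => // t _; rewrite inE.
by apply: connect_sub H => a b /andP [hab _]; apply: connect1.
Qed.
End H.

Theorem mainTheorem18 (T : finType) (e : rel T) :
  simple_graph e ->
  connected_graph e ->
  triangle_free e ->
  ~ has_full_star_cutset e ->
  ~ (is_path_graph e /\ #|T| <= 4) ->
  forall (T' : finType) (f : rel T'),
    simple_graph f ->
    is_subdivision e f ->
    [/\ connected_graph f, triangle_free f & ~ has_full_star_cutset f].
Proof.
move=> [esym eirr] econn etf encut npath T' f [fsym firr]
  [phi [P [phiI [Prev Ppath Puniq Pdisj [Pcover Pedge]]]]].
have Gconn : forall c d, connect e c d := econn.2.
have Tpos : 0 < #|T| := econn.1.
have Gstar : forall u (D : {set T}), (forall d, d \in D -> e u d) ->
    forall x y, x \notin u |: D -> y \notin u |: D -> connect (rel_minus e (u |: D)) x y.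
  by move=> u D hD x y hx hy; eapply star; eassumption.
have Gedge : forall u v (X : {set T}), e u v -> (forall z, z \in X -> (z == u) || (z == v)) ->
    forall x y, x \notin X -> y \notin X -> connect (eK e u v X) x y.
  by move=> u v X huv hX x y hx hy; eapply edge_conn; eassumption.
split.
- exact: (@H_conn T T' e f phi P fsym Ppath Puniq Pcover Gconn Tpos).
- by apply: (@H_tf T T' e f phi P).
- by apply: (@H_nocut T T' e f phi P).
Qed.
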